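(* In the algebra $\mathcal{SL}_{\hbar,q}$ generated by $b,c,g$ with relations $$q^2gb-bg=\hbar(q+q^{-1})b,\quad gc-q^2cg=-\hbar(q+q^{-1})c,\quad (q^2+1)(bc-cb)+(q^2-1)g^2=\hbar(q+q^{-1})g,$$ the matrix $$L=\begin{pmatrix} q[2]_q^{-1}g & b\\ c & -q^{-1}[2]_q^{-1}g\end{pmatrix}$$ satisfies $L^2-q^{-1}\hbar L+\sigma\,\mathrm{id}=0$, where $$\sigma=-[2]_q^{-1}\mathrm{Tr}_RL^2=-[2]_q^{-1}\big([2]_q^{-1}g^2+q^{-1}bc+q\,cb\big)$$ is central in $\mathcal{SL}_{\hbar,q}$. Consequently, in the quotient $\mathcal{SL}_{\hbar,q}/\langle\sigma-\alpha\rangle$ ($\alpha\in\mathbb{K}$ with $q^{-2}\hbar^2-4\alpha\ne0$), with $\mu_{0,1}=(q^{-1}\hbar\mp\sqrt{q^{-2}\hbar^2-4\alpha})/2$ and $e_0=(L-\mu_1)/(\mu_0-\mu_1)$, $e_1=(L-\mu_0)/(\mu_1-\mu_0)$, $$\mathrm{Tr}_Re_0=\frac{[2]_q}{2}+\frac{[2]_q\hbar}{2\sqrt{\hbar^2-4\alpha q^2}},\qquad \mathrm{Tr}_Re_1=\frac{[2]_q}{2}-\frac{[2]_q\hbar}{2\sqrt{\hbar^2-4\alpha q^2}},$$ with $\sqrt{\hbar^2-4\alpha q^2}=q\sqrt{q^{-2}\hbar^2-4\alpha}$.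
   Context: Here $q$ is generic, $\hbar\in\mathbb{K}$, $[m]_q=(q^m-q^{-m})/(q-q^{-1})$, so $[2]_q=q+q^{-1}$. Products of matrices with noncommuting entries are $(MN)_i^{\;j}=\sum_aM_i^{\;a}N_a^{\;j}$ (row index $i$, column index $j$). For a $2\times2$ matrix $M$ with entries in the algebra, $\mathrm{Tr}_RM=q^{-1}M_1^{\;1}+q\,M_2^{\;2}$ (the categorical trace for the Hecke symmetry $R$ with $R(x_1\otimes x_1)=q\,x_1\otimes x_1$, $R(x_2\otimes x_2)=q\,x_2\otimes x_2$, and matrix $\begin{pmatrix}\lambda&1\\1&0\end{pmatrix}$, $\lambda=q-q^{-1}$, on the span of $x_1\otimes x_2,x_2\otimes x_1$). The algebra above is the traceless part $\mathcal{SL}_{\hbar,q}$ of the modified reflection equation algebra for this $R$, with $g=a-d$ where $L=\begin{pmatrix}a&b\\c&d\end{pmatrix}$ and $q^{-1}a+qd=0$. The quotient by $\sigma-\alpha$ is the quantum non-commutative sphere. *)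

(* Defs.v *)
From HB Require Import structures.
From mathcomp Require Import all_boot all_order all_algebra.
Set Implicit Arguments. Unset Strict Implicit. Unset Printing Implicit Defensive.
Import GRing.Theory.
Local Open Scope ring_scope.

Section Defs.
Variables (K : fieldType) (A : algType K).

Definition qint2 (q : K) : K := q + q^-1.

Definition mx2 (a b c d : A) : 'M[A]_2 :=
  \matrix_(i < 2, j < 2)
    if (i : nat) == 0%N then (if (j : nat) == 0%N then a else b)
    else (if (j : nat) == 0%N then c else d).

Definition TrR (q : K) (M : 'M[A]_2) : A :=
  q^-1 *: M ord0 ord0 + q *: M ord_max ord_max.

Definition Lmat (q : K) (b c g : A) : 'M[A]_2 :=
  mx2 ((q / qint2 q) *: g) b c (- ((q^-1 / qint2 q) *: g)).

Definition SL_rels (q hbar : K) (b c g : A) : Prop :=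
  [/\ q ^+ 2 *: (g * b) - b * g = (hbar * qint2 q) *: b,
      g * c - q ^+ 2 *: (c * g) = - ((hbar * qint2 q) *: c) &
      (q ^+ 2 + 1) *: (b * c - c * b) + (q ^+ 2 - 1) *: (g * g)
        = (hbar * qint2 q) *: g].

Definition sigmaSL (q : K) (b c g : A) : A :=
  - ((qint2 q)^-1 *: TrR q (Lmat q b c g *m Lmat q b c g)).

End Defs.

(* Main.v *)
From HB Require Import structures.
From mathcomp Require Import all_boot all_order all_algebra.
From mathcomp Require Import ring.
Import GRing.Theory.
Local Open Scope ring_scope.

Section Phi.
Variables (K : fieldType) (V : lmodType K).
Definition Phi (v : seq V) (x : nat -> K) : V :=
  \sum_(i < size v) x i *: nth 0 v i.
Lemma PhiD v x y : Phi v x + Phi v y = Phi v (fun i => x i + y i).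
Proof. by rewrite /Phi -big_split; apply: eq_bigr => i _; rewrite scalerDl. Qed.
Lemma PhiZ v k x : k *: Phi v x = Phi v (fun i => k * x i).
Proof. by rewrite /Phi scaler_sumr; apply: eq_bigr => i _; rewrite scalerA. Qed.
Lemma PhiN v x : - Phi v x = Phi v (fun i => - x i).
Proof. by rewrite /Phi -sumrN; apply: eq_bigr => i _; rewrite scaleNr. Qed.
Lemma Phi_e v k : (k < size v)%N -> nth 0 v k = Phi v (fun i => (i == k)%:R).
Proof.
move=> hk; rewrite /Phi (bigD1 (Ordinal hk)) //= eqxx scale1r big1 ?addr0 //.
move=> i /negbTE; rewrite -val_eqE /= => ->; by rewrite scale0r.
Qed.
Lemma Phi0 v : 0 = Phi v (fun _ => 0).
Proof. by rewrite /Phi big1 // => i _; rewrite scale0r. Qed.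
Lemma Phi_ext v x y : (forall i, x i = y i) -> Phi v x = Phi v y.
Proof. by move=> h; apply: eq_bigr => i _; rewrite h. Qed.
End Phi.

Ltac phi_fold := repeat first [rewrite PhiZ | rewrite PhiN | rewrite PhiD].

Require Import Defs.

Ltac norm := rewrite ?(mul1r, mulr1, mulrDl, mulrDr, mulrBl, mulrBr, mulNr, mulrN, mulr_algl, mulr_algr, scalerDr, scalerBr, scalerN, scalerA, opprD, opprK, opprB).
Ltac norm2 := repeat (rewrite -?scalerAl -?scalerAr; norm).

Lemma sigmaE (K : fieldType) (A : algType K) (q : K) (b c g : A) :
  q != 0 -> q ^+ 2 + 1 != 0 ->
  sigmaSL q b c g = - ((qint2 q)^-1 *: ((qint2 q)^-1 *: (g * g)
                   + q^-1 *: (b * c) + q *: (c * b))).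
Proof.
move=> hq hq2.
have tE : qint2 q = (q ^+ 2 + 1) / q by rewrite /qint2; field.
rewrite /sigmaSL /TrR !mxE !big_ord_recr !big_ord0 /= !add0r /Lmat /mx2 !mxE /=.
norm2.
pose v := [:: g * g; b * c; c * b].
rewrite -[g * g]/(nth 0 v 0) -[b * c]/(nth 0 v 1) -[c * b]/(nth 0 v 2) !Phi_e //.
phi_fold.
refine (@Phi_ext _ A _ _ _ _); move=> -[|[|[|i]]] /=; rewrite tE; field; by rewrite hq hq2.
Qed.

Lemma gb_rel (K : fieldType) (A : algType K) (q k : K) (b g : A) :
  q != 0 -> q ^+ 2 *: (g * b) - b * g = k *: b ->
  g * b = b * (q^-2 *: g + (q^-2 * k)%:A).
Proof.
move=> hq r.
have e : q ^+ 2 *: (g * b) = b * g + k *: b by rewrite -r addrC subrK.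
have -> : g * b = q^-2 *: (q ^+ 2 *: (g * b)) by rewrite scalerA mulVf ?scale1r // expf_neq0.
rewrite e; norm2.
pose v := [:: b * g; b].
rewrite -[b * g]/(nth 0 v 0) -[b]/(nth 0 v 1) !Phi_e //; phi_fold; refine (@Phi_ext _ A _ _ _ _); move=> -[|[|i]] /=; ring.
Qed.

Lemma cg_rel (K : fieldType) (A : algType K) (q k : K) (c g : A) :
  q != 0 -> g * c - q ^+ 2 *: (c * g) = - (k *: c) ->
  c * g = (q^-2 *: g + (q^-2 * k)%:A) * c.
Proof.
move=> hq r.
have e : q ^+ 2 *: (c * g) = g * c + k *: c.
  by rewrite -[k *: c]opprK -r opprB addrC subrK.
have -> : c * g = q^-2 *: (q ^+ 2 *: (c * g)) by rewrite scalerA mulVf ?scale1r // expf_neq0.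
rewrite e; norm2.
pose v := [:: g * c; c].
rewrite -[g * c]/(nth 0 v 0) -[c]/(nth 0 v 1) !Phi_e //; phi_fold; refine (@Phi_ext _ A _ _ _ _); move=> -[|[|i]] /=; ring.
Qed.

Lemma cb_rel (K : fieldType) (A : algType K) (q k : K) (b c g : A) :
  q ^+ 2 + 1 != 0 ->
  (q ^+ 2 + 1) *: (b * c - c * b) + (q ^+ 2 - 1) *: (g * g) = k *: g ->
  c * b = b * c - (q ^+ 2 + 1)^-1 *: (k *: g - (q ^+ 2 - 1) *: (g * g)).
Proof.
move=> hq r.
rewrite -r addrK scalerA mulVf // scale1r; by rewrite opprB addrC subrK.
Qed.

Lemma central (K : fieldType) (A : algType K) (q t hbar lam : K) (b c g D : A) :
  let h := q^-2 *: g + lam%:A in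
  let P := fun x : A => (q ^+ 2 / t) *: (x * x) - hbar *: x in
  g * b = b * h -> c * g = h * c -> c * b = b * c - D -> P h = P g + t *: D ->
  let s := P g + t *: (b * c) in
  [/\ s * b = b * s, s * c = c * s & s * g = g * s].
Proof.
move=> h P gb cg cb key s.
have PgB : P g * b = b * P h.
  rewrite /P mulrBl -!scalerAl -[g * g * b]mulrA gb [g * (b * h)]mulrA gb -[b * h * h]mulrA mulrBr -!scalerAr //.
have cPg : c * P g = P h * c.
  rewrite /P mulrBr mulrBl -!scalerAr -!scalerAl [c * (g * g)]mulrA cg -[h * c * g]mulrA cg [h * (h * c)]mulrA //.
have PgG : P g * g = g * P g.
  by rewrite /P mulrBl mulrBr -!scalerAl -!scalerAr [g * (g * g)]mulrA.
move: key PgB cPg PgG; rewrite /s; move: (P g) (P h) => X Y key PgB cPg PgG.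
split.
{ rewrite mulrDl PgB key -scalerAl -[b * c * b]mulrA cb.
  norm2.
  pose v := [:: b * X; b * D; b * (b * c)].
  rewrite -[b * X]/(nth 0 v 0) -[b * D]/(nth 0 v 1) -[b * (b * c)]/(nth 0 v 2) !Phi_e //; phi_fold; refine (@Phi_ext _ A _ _ _ _); move=> -[|[|[|i]]] /=; ring. }
{ rewrite mulrDr cPg key -scalerAr [c * (b * c)]mulrA cb.
  norm2.
  pose v := [:: X * c; D * c; b * c * c].
  rewrite -[X * c]/(nth 0 v 0) -[D * c]/(nth 0 v 1) -[b * c * c]/(nth 0 v 2) !Phi_e //; phi_fold; refine (@Phi_ext _ A _ _ _ _); move=> -[|[|[|i]]] /=; ring. }
{ rewrite mulrDl mulrDr PgG -scalerAl -scalerAr -[b * c * g]mulrA cg [b * (h * c)]mulrA -gb [g * (b * c)]mulrA //. }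
Qed.

Theorem mainTheorem8 (K : fieldType) (A : algType K)
    (q hbar : K) (b c g : A) :
  [pchar K] =i pred0 ->
  q != 0 ->
  (forall n : nat, (0 < n)%N -> q ^+ n != 1) ->
  SL_rels q hbar b c g ->
  let L := Lmat q b c g in
  let sigma := sigmaSL q b c g in
  [/\ L *m L - ((q^-1 * hbar)%:A) *: L + sigma%:M = 0,
      sigma = - ((qint2 q)^-1 *: ((qint2 q)^-1 *: (g * g)
                   + q^-1 *: (b * c) + q *: (c * b))),
      sigma * b = b * sigma /\ sigma * c = c * sigma /\ sigma * g = g * sigma &
      forall (alpha s : K),
        s ^+ 2 = q^-2 * hbar ^+ 2 - 4%:R * alpha ->
        s != 0 ->
        sigma = alpha%:A ->
        let mu0 := (q^-1 * hbar - s) / 2%:R in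
        let mu1 := (q^-1 * hbar + s) / 2%:R in
        let e0 := ((mu0 - mu1)^-1)%:A *: (L - (mu1%:A)%:M) in
        let e1 := ((mu1 - mu0)^-1)%:A *: (L - (mu0%:A)%:M) in
        TrR q e0 = (qint2 q / 2%:R + qint2 q * hbar / (2%:R * (q * s)))%:A /\
        TrR q e1 = (qint2 q / 2%:R - qint2 q * hbar / (2%:R * (q * s)))%:A].
Proof.
move=> Hc hq hqn [r1 r2 r3] L sigma.
have h2 : 2%:R != 0 :> K.
  apply/negP => /eqP h; have := Hc 2%N; by rewrite inE /= h eqxx.
have hq2 : q ^+ 2 + 1 != 0.
  apply/negP => /eqP h; have := hqn 4%N isT.
  have -> : q ^+ 4 = (q ^+ 2) ^+ 2 by rewrite -exprM.
  by rewrite (_ : q ^+ 2 = -1) ?sqrrN ?expr1n ?eqxx //; apply/eqP; rewrite -subr_eq0 opprK h.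
have tE : qint2 q = (q ^+ 2 + 1) / q by rewrite /qint2; field.
have ht : qint2 q != 0 by rewrite tE mulf_neq0 ?invr_eq0.
have sE := @sigmaE _ _ _ b c g hq hq2.
have gb := @gb_rel _ _ _ _ _ _ hq r1.
have cg := @cg_rel _ _ _ _ _ _ hq r2.
have cb := @cb_rel _ _ _ _ _ _ _ hq2 r3.
set t := qint2 q in tE ht sE gb cg cb r1 r2 r3 *.
split.
- apply/matrixP => i j; rewrite !mxE !big_ord_recr !big_ord0 /= add0r.
  rewrite /L /Lmat /mx2 !mxE -/t.
  case: i => -[|[|//]] Hi; case: j => -[|[|//]] Hj /=; rewrite ?mulr1n ?mulr0n ?addr0 /sigma ?sE.
  { norm2; rewrite cb; norm2; pose v := [:: g * g; b * c; g].
    rewrite -[g * g]/(nth 0 v 0) -[b * c]/(nth 0 v 1) -[g]/(nth 0 v 2) !Phi_e //; rewrite (@Phi0 _ _ v); phi_fold; refine (@Phi_ext _ A _ _ _ _); move=> -[|[|[|i]]] /=; rewrite ?tE; field; by rewrite ?hq ?hq2. }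
  { norm2; rewrite gb; norm2; pose v := [:: b * g; b].
    rewrite -[b * g]/(nth 0 v 0) -[b]/(nth 0 v 1) !Phi_e //; rewrite (@Phi0 _ _ v); phi_fold; refine (@Phi_ext _ A _ _ _ _); move=> -[|[|[|i]]] /=; rewrite ?tE; field; by rewrite ?hq ?hq2. }
  { norm2; rewrite cg; norm2; pose v := [:: g * c; c].
    rewrite -[g * c]/(nth 0 v 0) -[c]/(nth 0 v 1) !Phi_e //; rewrite (@Phi0 _ _ v); phi_fold; refine (@Phi_ext _ A _ _ _ _); move=> -[|[|[|i]]] /=; rewrite ?tE; field; by rewrite ?hq ?hq2. }
  { norm2; rewrite cb; norm2; pose v := [:: g * g; b * c; g].
    rewrite -[g * g]/(nth 0 v 0) -[b * c]/(nth 0 v 1) -[g]/(nth 0 v 2) !Phi_e //; rewrite (@Phi0 _ _ v); phi_fold; refine (@Phi_ext _ A _ _ _ _); move=> -[|[|[|i]]] /=; rewrite ?tE; field; by rewrite ?hq ?hq2. }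
- exact sE.
- set D := (q ^+ 2 + 1)^-1 *: ((hbar * t) *: g - (q ^+ 2 - 1) *: (g * g)).
  have key : (q ^+ 2 / t) *: ((q^-2 *: g + (q^-2 * (hbar * t))%:A) * (q^-2 *: g + (q^-2 * (hbar * t))%:A))
     - hbar *: (q^-2 *: g + (q^-2 * (hbar * t))%:A)
     = ((q ^+ 2 / t) *: (g * g) - hbar *: g) + t *: D.
    rewrite /D; norm2; pose v := [:: g * g; g; 1 : A].
    rewrite -[g * g]/(nth 0 v 0) -[g]/(nth 0 v 1) -[1 : A]/(nth 0 v 2) !Phi_e //; phi_fold;
    refine (@Phi_ext _ A _ _ _ _); move=> -[|[|[|i]]] /=; rewrite ?tE; field; by rewrite ?hq ?hq2.
  have s2 : sigma = - (t^-1 *: (((q ^+ 2 / t) *: (g * g) - hbar *: g) + t *: (b * c))).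
    rewrite /sigma sE cb; norm2; pose v := [:: g * g; b * c; g].
    rewrite -[g * g]/(nth 0 v 0) -[b * c]/(nth 0 v 1) -[g]/(nth 0 v 2) !Phi_e //; phi_fold;
    refine (@Phi_ext _ A _ _ _ _); move=> -[|[|[|i]]] /=; rewrite ?tE; field; by rewrite ?hq ?hq2.
  have := @central K A q t hbar (q^-2 * (hbar * t)) b c g D gb cg cb key.
  move=> /= [sb sc sg].
  rewrite s2 !mulNr !mulrN -!scalerAl -!scalerAr sb sc sg; do !split.
- move=> alpha s hs hs0 hsig mu0 mu1 e0 e1.
  rewrite /e0 /e1 /TrR /L /Lmat /mx2 !mxE /= -/t.
  have f1 : q * s + q * s != 0 by rewrite -mulr2n -mulr_natr !mulf_neq0.
  have f2 : hbar + - s * q - (hbar + s * q) != 0.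
    have -> : hbar + - s * q - (hbar + s * q) = - ((s * q) * 2%:R) by ring.
    by rewrite oppr_eq0 !mulf_neq0.
  split; norm2; pose v := [:: g; 1 : A];
  rewrite -[g]/(nth 0 v 0) -[1 : A]/(nth 0 v 1) !Phi_e //; phi_fold;
  refine (@Phi_ext _ A _ _ _ _); move=> -[|[|i]] /=; rewrite /mu0 /mu1 ?tE; field; by rewrite ?f1 ?hq ?h2 ?f2 ?hq2.
Qed.
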